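(* Let $A$ be an $n\times n$ complex matrix with eigenvalues, multiplicities, $P_i$, $N_i$, $B(z)$ and $q_i$ as in the context. Then for every $i\in\{1,\dots,m\}$ and every integer $0\le s\le n_i-1$, $$\frac{d^{s}B(z)}{dz^{s}}\Big|_{z=\lambda_i}= s!\,N_i^{\,n_i-1-s}\,q_i(\lambda_i\mathbb{1}+N_i)\,P_i .$$ In particular, $$\frac{d^{n_i-1}B(z)}{dz^{n_i-1}}\Big|_{z=\lambda_i}=(n_i-1)!\,\prod_{j\ne i}(N_i+(\lambda_i-\lambda_j)\mathbb{1})^{n_j}\,P_i .$$
   Context: For an $n\times n$ complex matrix $A$ with distinct eigenvalues $\lambda_1,\dots,\lambda_m$ and algebraic multiplicities $n_1,\dots,n_m$, let $W_i=\ker(A-\lambda_i\mathbb{1})^{n_i}$ be the generalized eigenspace of $\lambda_i$, so $\mathbb{C}^n=\bigoplus_i W_i$. Let $P_i$ be the projection onto $W_i$ along $\bigoplus_{j\ne i}W_j$, and let $N_i=(A-\lambda_i\mathbb{1})P_i$ (a nilpotent matrix commuting with $P_i$, with $N_i^{n_i}=0$). Let $p(z)=\det(z\mathbb{1}-A)=\prod_{j=1}^m(z-\lambda_j)^{n_j}$, let $B(z)=\operatorname{Adj}(z\mathbb{1}-A)$ be the adjugate (transpose of the cofactor matrix) of $z\mathbb{1}-A$, a matrix polynomial in $z$, and let $q_i(z)=p(z)/(z-\lambda_i)^{n_i}=\prod_{j\ne i}(z-\lambda_j)^{n_j}$. For a polynomial $q$, $q(\lambda_i\mathbb{1}+N_i)$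 is the usual matrix polynomial evaluation. *)

(* Defs.v *)
From HB Require Import structures.
From mathcomp Require Import all_boot all_order all_algebra.
Set Implicit Arguments. Unset Strict Implicit. Unset Printing Implicit Defensive.
Import Order.TTheory GRing.Theory Num.Theory.
Local Open Scope ring_scope.

(* Column-vector convention: matrices act on column vectors x : 'cV_n by M *m x. *)

Definition in_gker (C : fieldType) (n : nat) (A : 'M[C]_n) (a : C) (k : nat)
  (x : 'cV[C]_n) : Prop := (A - a%:M) ^+ k *m x = 0.

(* P is the projection onto W_i = ker (A - lam i)^(mult i) along the sum of the
   W_j, j != i: it is the identity on W_i and vanishes on every W_j, j != i.
   (Since C^n is the direct sum of the W_j, this determines P uniquely.) *)
Definition is_spectral_proj (C : fieldType) (n m : nat) (A : 'M[C]_n)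
  (lam : 'I_m -> C) (mult : 'I_m -> nat) (i : 'I_m) (P : 'M[C]_n) : Prop :=
  (forall x, in_gker A (lam i) (mult i) x -> P *m x = x) /\
  (forall j, j != i -> forall x, in_gker A (lam j) (mult j) x -> P *m x = 0).

Definition qi_poly (C : fieldType) (m : nat) (lam : 'I_m -> C) (mult : 'I_m -> nat)
  (i : 'I_m) : {poly C} :=
  \prod_(j < m | j != i) ('X - (lam j)%:P) ^+ mult j.

Definition deriv_eval_mx (C : fieldType) (n : nat) (B : 'M[{poly C}]_n)
  (s : nat) (a : C) : 'M[C]_n :=
  map_mx (fun p => (p^`(s)).[a]) B.

(* Main.v *)
Require Import Defs.
From HB Require Import structures.
From mathcomp Require Import all_boot all_order all_algebra.
From mathcomp Require Import ring zify.
Set Implicit Arguments. Unset Strict Implicit. Unset Printing Implicit Defensive.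
Import Order.TTheory GRing.Theory Num.Theory.
Local Open Scope ring_scope.

Lemma hmxM (K : comNzRingType) n (A : 'M[K]_n.+1) p q :
  horner_mx A p *m horner_mx A q = horner_mx A (p * q).
Proof. by rewrite rmorphM. Qed.

Lemma hmxMv (K : comNzRingType) n k (A : 'M[K]_n.+1) p q (y : 'M_(n.+1,k)) :
  horner_mx A p *m (horner_mx A q *m y) = horner_mx A (p * q) *m y.
Proof. by rewrite mulmxA hmxM. Qed.

Lemma ker_prod_sub (K : fieldType) n (A P : 'M[K]_n.+1) (I : finType)
  (S : {pred I}) (f : I -> {poly K}) :
  {in S &, forall i j, j != i -> coprimep (f i) (f j)} ->
  (forall j, S j -> forall y : 'cV_n.+1, horner_mx A (f j) *m y = 0 -> P *m y = 0) ->
  forall y : 'cV_n.+1, horner_mx A (\prod_(j | S j) f j) *m y = 0 -> P *m y = 0.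
Proof.
move=> fcop fker; elim: (index_enum I) (index_enum_uniq I) => [|j js IH] /=.
  by move=> _ y; rewrite big_nil rmorph1 mul1mx => ->; rewrite mulmx0.
case/andP=> jNjs js_uniq y; rewrite big_cons; case: ifP => [Sj|_]; last exact: IH.
set F := \prod_(i <- js | S i) f i.
have cop : coprimep (f j) F.
  rewrite /F (@big_morph _ _ _ true andb) ?big_all_cond ?coprimep1//; last first.
    by move=> p q; rewrite coprimepMr.
  apply/allP => l l_js; apply/implyP => Sl; apply: fcop => //.
  by apply: contraNneq jNjs => <-.
case/Bezout_eq1_coprimepP: cop => [[a b]] /= hab hy.
have -> : y = horner_mx A (a * f j) *m y + horner_mx A (b * F) *m y.
  by rewrite -mulmxDl -rmorphD /= hab rmorph1 mul1mx.
rewrite mulmxDr (IH js_uniq) ?add0r.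
  apply: (fker j Sj); rewrite hmxMv mulrCA -hmxMv.
  by rewrite hy mulmx0.
by rewrite -/F hmxMv mulrCA (mulrC F) -hmxMv hy mulmx0.
Qed.
Lemma derivn_comp_shift (K : comNzRingType) (p : {poly K}) a s :
  (p \Po ('X + a%:P))^`(s) = p^`(s) \Po ('X + a%:P).
Proof.
elim: s p => [|s IH] p //.
rewrite !derivSn deriv_comp derivD derivX derivC addr0 mulr1; exact: IH.
Qed.

Lemma deriv_taylor (K : comNzRingType) (p : {poly K}) a s :
  (p^`(s)).[a] = s`!%:R * (p \Po ('X + a%:P))`_s.
Proof.
have -> : (p^`(s)).[a] = (p^`(s) \Po ('X + a%:P)).[0].
  by rewrite horner_comp hornerD hornerX hornerC add0r.
rewrite -derivn_comp_shift horner_coef0 coef_derivn addn0 ffactnn.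
by rewrite mulr_natl.
Qed.
Lemma horner_mx_shift (K : comNzRingType) n (N : 'M[K]_n.+1) a p :
  horner_mx (a%:M + N) p = horner_mx N (p \Po ('X + a%:P)).
Proof.
elim/poly_ind: p => [|p c IH]; first by rewrite !rmorph0.
rewrite rmorphD rmorphM /= horner_mx_X horner_mx_C IH.
rewrite rmorphD rmorphM /= comp_polyX comp_polyC.
rewrite rmorphD rmorphM /= rmorphD /= horner_mx_X !horner_mx_C addrC. by rewrite [N + _]addrC addrC.
Qed.

Lemma horner_mx_sum (K : comNzRingType) n (M : 'M[K]_n.+1) p :
  horner_mx M p = \sum_(r < size p) p`_r *: M ^+ r.
Proof.
rewrite -{1}[p]coefK poly_def rmorph_sum /=; apply: eq_bigr => r _.
by rewrite linearZ /= rmorphXn /= horner_mx_X.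
Qed.

Lemma sum_trunc (V : zmodType) (F : nat -> V) a b : (a <= b)%N ->
  (forall r, (a <= r)%N -> F r = 0) -> \sum_(r < b) F r = \sum_(r < a) F r.
Proof.
move=> le H; rewrite (big_ord_widen _ _ le) [RHS]big_mkcond /=.
apply: eq_bigr => i _; case: ifP => // /negbT; rewrite -leqNgt => /H ->//.
Qed.

Lemma sum_shift (V : zmodType) (F : nat -> V) d e :
  \sum_(t < (d + e)%N) F t = \sum_(t < d) F t + \sum_(r < e) F (d + r)%N.
Proof. by rewrite big_split_ord. Qed.

Lemma scal_cancel (K : idomainType) n (a : K) (M1 M2 : 'M[K]_n.+1) :
  a != 0 -> a%:M * M1 = a%:M * M2 -> M1 = M2.
Proof.
move=> a0; rewrite -!mulmxE !mul_scalar_mx => /matrixP h; apply/matrixP => x y.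
by move: (h x y); rewrite !mxE => /(mulfI a0).
Qed.

Theorem theorem3 (C : numClosedFieldType) (n m : nat) (A : 'M[C]_n.+1)
  (lam : 'I_m -> C) (mult : 'I_m -> nat)
  (lam_inj : injective lam)
  (mult_gt0 : forall j, (0 < mult j)%N)
  (hchar : char_poly A = \prod_(j < m) ('X - (lam j)%:P) ^+ mult j)
  (i : 'I_m) (P : 'M[C]_n.+1)
  (hP : is_spectral_proj A lam mult i P) :
  let N := (A - (lam i)%:M) *m P in
  let B := \adj (char_poly_mx A) in
  (forall s : nat, (s <= mult i - 1)%N ->
     deriv_eval_mx B s (lam i)
     = (s`!)%:R *: (N ^+ (mult i - 1 - s) *m
                     horner_mx ((lam i)%:M + N) (qi_poly lam mult i) *m P))
  /\
  deriv_eval_mx B (mult i - 1) (lam i)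
  = ((mult i - 1)`!)%:R *:
      ((\prod_(j < m | j != i) (N + (lam i - lam j)%:M) ^+ mult j) *m P).
Proof.
move=> N B.
have k_gt0 := mult_gt0 i.
set k := mult i in k_gt0 *.
set T := A - (lam i)%:M.
set R := ('X - (lam i)%:P) ^+ k.
set Q := qi_poly lam mult i.
have hRQ : char_poly A = R * Q by rewrite hchar (bigD1 i).
have hT : T = horner_mx A ('X - (lam i)%:P).
  by rewrite rmorphB /= horner_mx_X horner_mx_C.
have hRA : horner_mx A R = T ^+ k by rewrite rmorphXn /= -hT.
have CH : horner_mx A (R * Q) = 0 by rewrite -hRQ Cayley_Hamilton.
have cop : coprimep R Q.
  rewrite /R coprimep_sym; apply: coprimep_expr; rewrite coprimep_XsubC /root.
  rewrite /Q /qi_poly horner_prod; apply/prodf_neq0 => j ji.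
  rewrite horner_exp expf_neq0 // hornerXsubC subr_eq0.
  by apply: contra ji => /eqP /lam_inj ->.
case/Bezout_eq1_coprimepP: cop => [[u v]] /= huv.
set E := horner_mx A (v * Q).
have eq1E : 1 - E = horner_mx A (u * R).
  by rewrite /E -[1 in LHS](rmorph1 (horner_mx A)) -huv rmorphD /= addrK.
have hPE : P = E.
  have hx : forall x : 'cV_n.+1, P *m x = E *m x.
    move=> x.
    have h1 : P *m (E *m x) = E *m x.
      apply: hP.1; rewrite /in_gker -/T -/k -hRA hmxMv mulrCA -hmxMv CH.
      by rewrite mul0mx mulmx0.
    have h2 : P *m ((1 - E) *m x) = 0.
      apply: (@ker_prod_sub _ _ A P _ (fun j => j != i)
               (fun j => ('X - (lam j)%:P) ^+ mult j)).
      - move=> j l _ _ lj; apply: coprimep_expl; apply: coprimep_expr.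
        rewrite coprimep_XsubC root_XsubC.
        by apply: contra lj => /eqP /lam_inj ->.
      - move=> j ji y hy; apply: (hP.2 j ji).
        by move: hy; rewrite rmorphXn rmorphB /= horner_mx_X horner_mx_C.
      rewrite -/(qi_poly lam mult i) -/Q eq1E hmxMv mulrCA (mulrC Q) -hmxMv CH.
      by rewrite mul0mx mulmx0.
    have -> : P *m x = P *m (E *m x) + P *m ((1 - E) *m x).
      by rewrite -mulmxDr -mulmxDl addrC subrK mul1mx.
    by rewrite h1 h2 addr0.
  apply/matrixP => a b; have := hx (delta_mx b 0).
  rewrite -!colE => /(congr1 (fun M : 'cV_n.+1 => M a 0)); by rewrite !mxE.
subst P.
have comm p q : horner_mx A p * horner_mx A q = horner_mx A q * horner_mx A p.
  by rewrite -!rmorphM mulrC.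
have hTE : T * E = E * T by rewrite hT comm.
have hTkE : T ^+ k * E = 0.
  by rewrite -hRA -rmorphM /= mulrCA (rmorphM _ v) /= CH mulr0.
have hEE : E * E = E.
  rewrite -rmorphM /=.
  have -> : v * Q * (v * Q) = v * Q - (u * v) * (R * Q).
    have e : v * Q * (v * Q) = v * Q * (u * R + v * Q) - (u * v) * (R * Q) by ring.
    by rewrite e huv mulr1.
  by rewrite rmorphB /= (rmorphM _ (u * v)) /= CH mulr0 subr0.
have h1E : 1 - E = T ^+ k * horner_mx A u by rewrite eq1E mulrC rmorphM /= hRA.
have hTjE j : (k <= j)%N -> T ^+ j * E = 0.
  by move=> kj; rewrite -(subnK kj) exprD -mulrA hTkE mulr0.
have hNE1 : N * E = T * E by rewrite /N mulmxE -mulrA hEE.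
have hNE j : N ^+ j * E = T ^+ j * E.
  elim: j => [|j IH]; first by rewrite !expr0.
  by rewrite exprSr -mulrA hNE1 hTE mulrA IH -mulrA -hTE mulrA -exprSr.
pose tQ := Q \Po ('X + (lam i)%:P).
set B' := map_mx (comp_poly ('X + (lam i)%:P)) B.
set TP := map_mx (@polyC C) T.
set EP := map_mx (@polyC C) E.
have scalC (a : {poly C}) (M : 'M_n.+1) : a%:M * M = M * a%:M.
  by rewrite -!mulmxE scalar_mxC.
have tR : R \Po ('X + (lam i)%:P) = 'X ^+ k.
  by rewrite /R rmorphXn rmorphB /= comp_polyX comp_polyC addrK.
have step1 : B' * ('X%:M - TP) = ('X ^+ k * tQ)%:M.
  have := congr1 (map_mx (comp_poly ('X + (lam i)%:P))) (mul_adj_mx (char_poly_mx A)).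
  rewrite map_mxM map_scalar_mx -/B -/B' -[\det _]/(char_poly A) hRQ rmorphM /=.
  rewrite tR -/tQ mulmxE => <-; congr (_ * _).
  rewrite /char_poly_mx map_mxB /= map_scalar_mx /= comp_polyX.
  have -> : map_mx (comp_poly ('X + (lam i)%:P)) (map_mx (@polyC C) A)
            = map_mx (@polyC C) A.
    by apply/matrixP => a b; rewrite !mxE comp_polyC.
  rewrite /TP /T raddfB /= map_scalar_mx /=.
  by rewrite (rmorphD (@scalar_mx _ n.+1)) opprB addrA.
have hcomm : GRing.comm ('X%:M : 'M[{poly C}]_n.+1) TP by rewrite /GRing.comm scalC.
set G := \sum_(t < k) ('X%:M) ^+ (k.-1 - t) * TP ^+ t.
have step3 : B' * (('X ^+ k)%:M - TP ^+ k) = ('X ^+ k * tQ)%:M * G.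
  by rewrite rmorphXn (subrXX_comm k hcomm) mulrA step1.
have TkEP : TP ^+ k * EP = 0.
  have : map_mx (@polyC C) (T ^+ k * E) = 0 by rewrite hTkE map_mx0.
  by rewrite rmorphM rmorphXn.
have Xk0 : ('X ^+ k : {poly C}) != 0 by rewrite expf_neq0 ?polyX_eq0.
have step4 : B' * EP = (tQ)%:M * G * EP.
  have h := congr1 (fun M => M * EP) step3; move: h => /=.
  rewrite -(mulrA B') mulrBl TkEP subr0 => h.
  apply: (scal_cancel Xk0).
  rewrite mulrA scalC -(mulrA B') h scalar_mxM !mulmxE !mulrA //.
have step5 : B' * (1 - EP) =
    ('X ^+ k)%:M * ((B' - (tQ)%:M * G) * map_mx (@polyC C) (horner_mx A u)).
  have e : 1 - EP = TP ^+ k * map_mx (@polyC C) (horner_mx A u).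
    have := congr1 (map_mx (@polyC C)) h1E.
    by rewrite rmorphB rmorph1 rmorphM rmorphXn.
  rewrite e mulrA [RHS]mulrA; congr (_ * _).
  have -> : B' * TP ^+ k = B' * ('X ^+ k)%:M - ('X ^+ k * tQ)%:M * G.
    by rewrite -step3 mulrBr opprB addrC subrK.
  by rewrite mulrBr -scalC scalar_mxM !mulmxE !mulrA.
have step6 : B' = (tQ)%:M * G * EP +
    ('X ^+ k)%:M * ((B' - (tQ)%:M * G) * map_mx (@polyC C) (horner_mx A u)).
  by rewrite -step4 -step5 -mulrDr addrC subrK mulr1.
have cfC s c (M : 'M[C]_n.+1) :
    map_mx (coefp s) (c%:M * map_mx (@polyC C) M) = c`_s *: M.
  by apply/matrixP => a b; rewrite -mulmxE mul_scalar_mx !mxE /= coefMC.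
have hG : tQ%:M * G * EP =
    \sum_(t < k) (tQ * 'X^(k.-1 - t))%:M * map_mx (@polyC C) (T ^+ t * E).
  rewrite /G mulr_sumr mulr_suml; apply: eq_bigr => t _.
  by rewrite !rmorphM !rmorphXn /= !mulrA.
rewrite !subn1.
have part1 : forall s : nat, (s <= k.-1)%N ->
     deriv_eval_mx B s (lam i)
     = (s`!)%:R *: (N ^+ (k.-1 - s) *m
                     horner_mx ((lam i)%:M + N) Q *m E).
  move=> s hs.
  have hd : deriv_eval_mx B s (lam i) = s`!%:R *: map_mx (coefp s) B'.
    by apply/matrixP => a b; rewrite !mxE /= deriv_taylor.
  rewrite hd; congr (_ *: _).
  rewrite step6 map_mxD.
  have -> : map_mx (coefp s) (('X ^+ k)%:M *
      ((B' - tQ%:M * G) * map_mx (@polyC C) (horner_mx A u))) = 0.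
    apply/matrixP => a b; rewrite -mulmxE mul_scalar_mx !mxE /= coefXnM ifT //.
    lia.
  rewrite addr0 hG map_mx_sum.
  under eq_bigr do rewrite cfC coefMXn.
  rewrite !mulmxE horner_mx_shift -/tQ horner_mx_sum mulr_sumr mulr_suml.
  under [RHS]eq_bigr do rewrite -scalerAr -scalerAl -exprD hNE.
  transitivity (\sum_(r < s.+1) tQ`_r *: (T ^+ (k.-1 - s + r) * E)).
    have ek : k = (k.-1 - s + s.+1)%N by lia.
    have -> : \sum_(t < k) (if (s < k.-1 - t)%N then 0 else tQ`_(s - (k.-1 - t)))
                 *: (T ^+ t * E) =
              \sum_(t < (k.-1 - s + s.+1)%N)
                 (if (s < k.-1 - t)%N then 0 else tQ`_(s - (k.-1 - t)))
                 *: (T ^+ t * E).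
      by rewrite -ek.
    rewrite (sum_shift (fun t : nat => (if (s < k.-1 - t)%N then 0 else tQ`_(s - (k.-1 - t))) *: (T ^+ t * E))) big1 ?add0r.
      apply: eq_bigr => r _.
      have r_le := ltn_ord r.
      rewrite ifF; last by apply/negbTE; rewrite -leqNgt; lia.
      by have -> : (s - (k.-1 - (k.-1 - s + r)) = r)%N by lia.
    move=> t _; have t_lt := ltn_ord t.
    by rewrite ifT ?scale0r //; lia.
  symmetry.
  pose F := fun r => tQ`_r *: (T ^+ (k.-1 - s + r) * E).
  have F0 r : (minn (size tQ) s.+1 <= r)%N -> F r = 0.
    rewrite geq_min => /orP [h|h]; first by rewrite /F nth_default // scale0r.
    by rewrite /F hTjE ?scaler0 //; lia.
  rewrite (@sum_trunc _ F (minn (size tQ) s.+1) (size tQ)) ?geq_minl //.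
  by rewrite (@sum_trunc _ F (minn (size tQ) s.+1) s.+1) ?geq_minr.
split; first exact: part1.
rewrite (part1 k.-1 (leqnn _)) subnn expr0 mul1mx.
congr (_ *: (_ *m _)).
rewrite /Q /qi_poly rmorph_prod; apply: eq_bigr => j _.
rewrite rmorphXn rmorphB /= horner_mx_X horner_mx_C.
congr (_ ^+ _).
by rewrite (rmorphB (@scalar_mx C n.+1)) addrAC addrC addrA.
Qed.
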